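(* Let $G=(V,E)$ be a reaction network in $\mathbb{R}^n$ with deficiency zero that is not weakly reversible. Then for every choice of rate constants $\mathbf{k}\in\mathbb{R}^{|E|}_{>0}$ and every initial condition $\mathbf{x}_0\in\mathbb{R}^n_{>0}$ whose stoichiometric compatibility class $\mathcal{S}_{\mathbf{x}_0}$ is bounded, the solution $\mathbf{x}(t)$ of the mass-action system $(G,\mathbf{k})$ with $\mathbf{x}(0)=\mathbf{x}_0$ satisfies $\liminf_{t\to\infty}x_i(t)=0$ for some $1\le i\le n$; i.e., $(G,\mathbf{k})$ exhibits weak extinction in some species $X_i$.
   Context: A reaction network $G=(V,E)$ is a finite directed graph with vertex set $V\subset\mathbb{Z}^n_{\ge0}$, no self-loops, no isolated vertices, at most one edge per ordered pair; an edge $\mathbf{y}\to\mathbf{y}'$ is a reaction. Species $X_1,\dots,X_n$ correspond to the coordinates $x_1,\dots,x_n$. Linkage classes are the connected components of the underlying undirected graph; $G$ is weakly reversible if every reaction lies on a directed cycle. The stoichiometric subspace is $\mathcal{S}_G=\operatorname{span}\{\mathbf{y}'-\mathbf{y}:\mathbf{y}\to\mathbf{y}'\in E\}$ and the deficiency is $|V|-\ell-\dim\mathcal{S}_G$ with $\ell$ the number of linkage classes. The mass-action system $(G,\mathbf{k})$ with $\mathbf{k}\in\mathbb{R}^{|E|}_{>0}$ is $\dot{\mathbf{x}}=\sum_{\mathbf{y}\to\mathbf{y}'\in E}k_{\mathbf{y}\to\mathbf{y}'}\mathbf{x}^{\mathbf{y}}(\mathbf{y}'-\mathbf{y})$ on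 $\mathbb{R}^n_{>0}$, with $\mathbf{x}^{\mathbf{y}}=\prod_i x_i^{y_i}$; $\mathbb{R}^n_{>0}$ is forward invariant and solutions stay in the stoichiometric compatibility class $\mathcal{S}_{\mathbf{x}_0}=(\mathbf{x}_0+\mathcal{S}_G)\cap\mathbb{R}^n_{>0}$. The system exhibits weak extinction in $X_i$ if for some $\mathbf{x}_0\in\mathbb{R}^n_{>0}$ the solution satisfies $\liminf_{t\to\infty}x_i(t)=0$. *)

(* Defs.v *)
From HB Require Import structures.
From mathcomp Require Import all_boot all_order all_algebra.
From mathcomp Require Import all_classical all_reals all_analysis.
Set Implicit Arguments. Unset Strict Implicit. Unset Printing Implicit Defensive.
Import Order.TTheory GRing.Theory Num.Theory.
Import numFieldNormedType.Exports.

Local Open Scope ring_scope.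

Definition cplx (n : nat) := 'rV[nat]_n.
(* A reaction network is given by
   its list of reactions E; its vertex set V is the set of complexes occurring
   in some reaction (so there are no isolated vertices). *)
Definition reaction (n : nat) := (cplx n * cplx n)%type.

Definition is_network (n : nat) (E : seq (reaction n)) : bool :=
  uniq E && all (fun e => e.1 != e.2) E.

Definition vertices (n : nat) (E : seq (reaction n)) : seq (cplx n) :=
  undup (flatten [seq [:: e.1; e.2] | e <- E]).

Definition uadj (n : nat) (E : seq (reaction n)) : rel (seq_sub (vertices E)) :=
  fun a b => ((val a, val b) \in E) || ((val b, val a) \in E).

Definition nlinkage (n : nat) (E : seq (reaction n)) : nat :=
  #|[set [set b | connect (@uadj n E) a b] | a : seq_sub (vertices E)]|.

Local Open Scope classical_set_scope.

Definition reaches (n : nat) (E : seq (reaction n)) (y z : cplx n) : Prop :=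
  exists p : seq (cplx n), path (fun a b => (a, b) \in E) y p /\ last y p = z.

Definition weakly_reversible (n : nat) (E : seq (reaction n)) : Prop :=
  forall e, e \in E -> reaches E e.2 e.1.

Definition reaction0 (n : nat) : reaction n := (0, 0).

(* reaction vectors y' - y as rows; the row space is the stoichiometric subspace *)
Definition stoich (R : realType) (n : nat) (E : seq (reaction n)) : 'M[R]_(size E, n) :=
  \matrix_(j < size E, i < n)
    (((nth (reaction0 n) E j).2 0 i)%:R - ((nth (reaction0 n) E j).1 0 i)%:R).

Definition deficiency (R : realType) (n : nat) (E : seq (reaction n)) : int :=
  (size (vertices E))%:Z - (nlinkage E)%:Z - (\rank (stoich R E))%:Z.

Definition monom (R : realType) (n : nat) (y : cplx n) (x : 'rV[R]_n) : R :=
  \prod_(i < n) x 0 i ^+ y 0 i.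

Definition mass_action (R : realType) (n : nat) (E : seq (reaction n))
  (k : 'I_(size E) -> R) (x : 'rV[R]_n) : 'rV[R]_n :=
  \sum_(j < size E) (k j * monom (nth (reaction0 n) E j).1 x) *: row j (stoich R E).

Definition positive_vec (R : realType) (n : nat) (x : 'rV[R]_n) : Prop :=
  forall i : 'I_n, 0 < x 0 i.

Definition compat_class (R : realType) (n : nat) (E : seq (reaction n))
  (x0 : 'rV[R]_n) : set 'rV[R]_n :=
  fun x => positive_vec x /\ (x - x0 <= stoich R E)%MS.

Definition bounded_class (R : realType) (n : nat) (S : set 'rV[R]_n) : Prop :=
  exists M : R, forall x, S x -> forall i : 'I_n, `|x 0 i| <= M.

Definition is_solution (R : realType) (n : nat) (E : seq (reaction n))
  (k : 'I_(size E) -> R) (x0 : 'rV[R]_n) (x : R -> 'rV[R]_n) : Prop :=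
  [/\ x 0 = x0,
      (forall t : R, 0 <= t -> positive_vec (x t)),
      (forall i : 'I_n, (fun s => x s 0 i) @ 0^'+ --> x0 0 i) &
      (forall t : R, 0 < t -> forall i : 'I_n,
          is_derive t (1 : R) (fun s : R => x s 0 i) (mass_action k (x t) 0 i))].

Definition liminf_zero (R : realType) (f : R -> R) : Prop :=
  limf_einf (fun t => (f t)%:E) (pinfty_nbhs R) = 0%E.

(* Main.v *)
Require Import Defs.
From HB Require Import structures.
From mathcomp Require Import all_boot all_order all_algebra.
From mathcomp Require Import all_classical all_reals all_analysis.
From mathcomp Require Import zify ring lra.
Import Order.TTheory GRing.Theory Num.Theory.
Import numFieldNormedType.Exports.
Set Implicit Arguments. Unset Strict Implicit. Unset Printing Implicit Defensive.
Local Open Scope ring_scope.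

Lemma src_in (n : nat) (E : seq (reaction n)) (j : 'I_(size E)) :
  (nth (reaction0 n) E j).1 \in vertices E.
Proof.
rewrite /vertices mem_undup; apply/flatten_mapP.
by exists (nth (reaction0 n) E j); [exact: mem_nth|rewrite inE eqxx].
Qed.

Lemma tgt_in (n : nat) (E : seq (reaction n)) (j : 'I_(size E)) :
  (nth (reaction0 n) E j).2 \in vertices E.
Proof.
rewrite /vertices mem_undup; apply/flatten_mapP.
by exists (nth (reaction0 n) E j); [exact: mem_nth|rewrite !inE eqxx orbT].
Qed.

Lemma sum_ind (R : realType) (n : nat) (V : seq (cplx n)) (z : cplx n)
  (Hz : z \in V) (F : 'I_#|{: seq_sub V}| -> R) :
  \sum_(v < #|{: seq_sub V}|) ((ssval (enum_val v) == z)%:R * F v) =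
  F (enum_rank (SeqSub Hz)).
Proof.
rewrite (bigD1 (enum_rank (SeqSub Hz))) //= enum_rankK /= eqxx mul1r.
rewrite big1 ?addr0 // => v Hv.
case: eqP => [Ev|]; last by rewrite mul0r.
exfalso; move: Hv; rewrite -(enum_valK v).
have -> : enum_val v = SeqSub Hz by apply: val_inj.
by rewrite eqxx.
Qed.

Lemma class_eq (T : finType) (e : rel T) (He : symmetric e) (a a' z : T) :
  connect e a z -> connect e a' z ->
  [set b | connect e a b] = [set b | connect e a' b].
Proof.
move=> Ha Ha'; apply/setP => b; rewrite !inE.
have cs := sym_connect_sym He.
apply/idP/idP => H.
- apply: connect_trans Ha' _; apply: connect_trans _ H; by rewrite cs.
- apply: connect_trans Ha _; apply: connect_trans _ H; by rewrite cs.
Qed.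

Lemma uadj_sym (n : nat) (E : seq (reaction n)) : symmetric (@uadj n E).
Proof. by move=> a b; rewrite /uadj orbC. Qed.

Lemma defzero_w (R : realType) (n : nat) (E : seq (reaction n)) (A : cplx n -> bool) :
  deficiency R E = 0 ->
  exists w : 'cV[R]_n, forall j : 'I_(size E),
    (stoich R E *m w) j 0 = (A (nth (reaction0 n) E j).2)%:R - (A (nth (reaction0 n) E j).1)%:R.
Proof.
move=> Hdef.
set V := vertices E.

set m := (#|{: seq_sub V}|).
have HmV : m = size V by rewrite /m card_seq_sub // undup_uniq.
set src := fun j : 'I_(size E) => (nth (reaction0 n) E j).1.
set tgt := fun j : 'I_(size E) => (nth (reaction0 n) E j).2.
pose B : 'M[R]_(size E, m) := \matrix_(j, v)
  ((ssval (enum_val v) == tgt j)%:R - (ssval (enum_val v) == src j)%:R).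
pose Y : 'M[R]_(m, n) := \matrix_(v, i) ((ssval (enum_val v) : cplx n) 0 i)%:R.
have SBY : stoich R E = B *m Y.
  apply/matrixP => j i; rewrite !mxE.
  under eq_bigr do rewrite !mxE mulrBl.
  rewrite sumrB (sum_ind (tgt_in j)) (sum_ind (src_in j)).
  by rewrite !enum_rankK.
set P := [set [set b | connect (@uadj n E) a b] | a : seq_sub V].
have HlP : nlinkage E = #|P| by [].
pose K : 'M[R]_(#|P|, m) := \matrix_(i < #|P|, v < m) ((enum_val (v : 'I_#|{: seq_sub V}|)) \in (enum_val (i : 'I_#|P|) : {set seq_sub V}))%:R.
have KB : K *m B^T = 0.
  apply/matrixP => i j; rewrite !mxE.
  under eq_bigr do rewrite !mxE mulrBr ![_ * (_ == _)%:R]mulrC.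
  rewrite sumrB (sum_ind (tgt_in j)) (sum_ind (src_in j)) !enum_rankK.
  have : enum_val i \in P by exact: enum_valP.
  case/imsetP => a _ ->; rewrite !inE.
  have e : connect (@uadj n E) (SeqSub (src_in j)) (SeqSub (tgt_in j)).
    apply: connect1; rewrite /uadj /=.
    by rewrite /src /tgt -surjective_pairing mem_nth.
  have cs := sym_connect_sym (@uadj_sym n E).
  suff -> : connect (@uadj n E) a (SeqSub (tgt_in j)) =
            connect (@uadj n E) a (SeqSub (src_in j)) by rewrite subrr.
  apply/idP/idP => H.
  - by apply: connect_trans H _; rewrite cs.
  - exact: connect_trans H e.
have Hex : forall q : 'I_#|P|, exists v : seq_sub V, v \in (enum_val q : {set seq_sub V}).
  move=> q; have : enum_val q \in P by exact: enum_valP.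
  by case/imsetP => a _ ->; exists a; rewrite inE connect0.
pose r := fun q : 'I_#|P| => enum_rank (proj1_sig (sigW (Hex q))).
pose Sel : 'M[R]_(m, #|P|) := \matrix_(v < m, q < #|P|) ((v : 'I_#|{: seq_sub V}|) == r q)%:R.
have KSel : K *m Sel = 1%:M.
  apply/matrixP => i q; rewrite !mxE.
  rewrite (bigD1 (r q)) //= !mxE eqxx mulr1 big1 ?addr0; last first.
    by move=> v /negbTE Hv; rewrite !mxE Hv mulr0.
  rewrite /r enum_rankK.
  case: (sigW (Hex q)) => z Hr /=.
  have : enum_val q \in P by exact: enum_valP.
  case/imsetP => a _ Ea.
  case: (eqVneq i q) => [->|Hiq]; first by rewrite Hr.
  case Hin: (z \in enum_val i) => //.
  exfalso; move/negP: Hiq; apply; apply/eqP; apply: enum_val_inj.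
  have : enum_val i \in P by exact: enum_valP.
  case/imsetP => a' _ Ea'.
  rewrite Ea Ea'; apply: (@class_eq _ _ (@uadj_sym n E) a' a z).
  - by move: Hin; rewrite Ea' inE.
  - by move: Hr; rewrite Ea inE.
have rK : (#|P| <= \rank K)%N.
  by rewrite -{1}(mxrank1 R #|P|) -KSel mxrankM_maxl.
have rKB : (\rank K <= m - \rank B)%N.
  rewrite -(mxrank_tr B) -mxrank_ker; apply: mxrankS; exact/sub_kermxP.
have rBm : (\rank B <= m)%N by exact: rank_leq_col.
have rSB : (\rank (stoich R E) <= \rank B)%N by rewrite SBY mxrankM_maxl.
move: Hdef; rewrite /deficiency HlP -/V.
move=> Hd.
have Hd' : (size V = #|P| + \rank (stoich R E))%N.
  by move/eqP: Hd; rewrite -addrA -opprD subr_eq0 -PoszD => /eqP [] ->.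
have rBS : \rank B = \rank (stoich R E).
  apply/eqP; rewrite eqn_leq rSB /=.
  have : (#|P| <= m - \rank B)%N by exact: leq_trans rK rKB.
  move: rBm Hd' HmV.
  move: (\rank B) (\rank (stoich R E)) (size V) #|P| => rb rs sv p.
  rewrite /m; move: #|_| => mm; lia.
have sub1 : ((stoich R E)^T <= B^T)%MS by rewrite SBY trmx_mul submxMl.
have sub2 : (B^T <= (stoich R E)^T)%MS.
  by rewrite -(mxrank_leqif_sup sub1).2 !mxrank_tr rBS.
pose u : 'cV[R]_m := \col_v (A (ssval (enum_val v)))%:R.
have sub3 : ((B *m u)^T <= (stoich R E)^T)%MS.
  by apply: submx_trans sub2; rewrite trmx_mul submxMl.
case/submxP: sub3 => D HD.
exists D^T => j.
have -> : stoich R E *m D^T = B *m u.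
  by apply: trmx_inj; rewrite trmx_mul trmxK HD.
rewrite !mxE; under eq_bigr do rewrite !mxE mulrBl.
by rewrite sumrB (sum_ind (tgt_in j)) (sum_ind (src_in j)) !enum_rankK.
Qed.

Local Open Scope classical_set_scope.

Lemma mvt_pos (R : realType) (f df : R -> R) (a b : R) :
  0 < a -> a < b -> (forall t : R, 0 < t -> is_derive t (1 : R) f (df t)) ->
  exists2 c, a < c & f b - f a = df c * (b - a).
Proof.
move=> a0 ab Hd.
have Hd' : forall t, t \in `]a, b[%R -> is_derive t (1:R) f (df t).
  by move=> t; rewrite in_itv /= => /andP[H1 _]; apply: Hd; exact: lt_trans a0 H1.
have cont : {within `[a, b], continuous f}.
  apply: derivable_within_continuous => t; rewrite in_itv /= => /andP[H1 _].
  by case: (Hd t (lt_le_trans a0 H1)).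
have [c Hc ->] := MVT ab Hd' cont.
by exists c => //; move: Hc; rewrite in_itv /= => /andP[].
Qed.

Lemma sum_cvg (R : realType) (n : nat) (F : set_system R) (FF : Filter F)
  (g : 'I_n -> R -> R) (l : 'I_n -> R) :
  (forall i, g i @ F --> l i) ->
  (fun s => \sum_(i < n) g i s) @ F --> \sum_(i < n) l i.
Proof.
move=> H; rewrite -(fct_sumE (index_enum _) predT g).
apply: (big_ind2 (fun (f : R -> R) (l : R) => f @ F --> l)) => //.
- exact: cvg_cst.
- by move=> f1 l1 f2 l2 H1 H2; apply: cvgD.
Qed.

Lemma liminf_pos (R : realType) (f : R -> R) :
  (forall t, 0 <= t -> 0 < f t) ->
  ~ liminf_zero f ->
  exists2 c : R, 0 < c & \forall t \near +oo, c <= f t.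
Proof.
move=> fpos; rewrite /liminf_zero limf_einfE => Hne.
set S := [set ereal_inf [set (f t)%:E | t in V] | V in pinfty_nbhs R].
have Vp : pinfty_nbhs R [set t | 0 < t].
  by exists 0; split => // t.
have ge0 : (0 <= ereal_sup S)%E.
  apply: (@le_trans _ _ (ereal_inf [set (f t)%:E | t in [set t | 0 < t]])).
    apply: le_ereal_inf_tmp => _ [t /= t0 <-]; by rewrite lee_fin; apply/ltW/fpos/ltW.
  by move: (@ereal_sup_ubound _ S) => U; apply: U; exists [set t | 0 < t].
have gt0 : (0 < ereal_sup S)%E by rewrite lt_neqAle ge0 andbT; apply/eqP => H; apply: Hne.
have [y [V HV <-] Hy] := ereal_sup_gt gt0.
have Hlb : forall t, V t -> (ereal_inf [set (f t)%:E | t in V] <= (f t)%:E)%E.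
  by move=> t Vt; apply: ereal_inf_lbound; exists t.
move: Hy Hlb; case: (ereal_inf _) => [r| |] //.
- rewrite lte_fin => r0 Hlb; exists r => //.
  by apply: filterS HV => t Vt; rewrite -lee_fin; apply: Hlb.
- move=> _ Hlb; exists 1 => //.
  by apply: filterS HV => t Vt; have := Hlb t Vt.
Qed.

Lemma ma_eq (R : realType) (n : nat) (E : seq (reaction n)) (k : 'I_(size E) -> R)
  (z : 'rV[R]_n) (p : 'I_n -> R) :
  \sum_(i < n) p i * mass_action k z 0 i =
  \sum_(j < size E) (k j * monom (nth (reaction0 n) E j).1 z) *
     \sum_(i < n) stoich R E j i * p i.
Proof.
rewrite /mass_action.
under eq_bigr do rewrite summxE mulr_sumr.
rewrite exchange_big /=; apply: eq_bigr => j _.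
rewrite mulr_sumr; apply: eq_bigr => i _.
by rewrite !mxE; ring.
Qed.

Lemma deriv_L (R : realType) (n : nat) (E : seq (reaction n)) (k : 'I_(size E) -> R)
  (x : R -> 'rV[R]_n) (p : 'I_n -> R) (t : R) :
  (forall i, is_derive t (1 : R) (fun s => x s 0 i) (mass_action k (x t) 0 i)) ->
  is_derive t (1 : R) (fun s => \sum_(i < n) p i * x s 0 i)
    (\sum_(j < size E) (k j * monom (nth (reaction0 n) E j).1 (x t)) *
     \sum_(i < n) stoich R E j i * p i).
Proof.
move=> Hd; rewrite -ma_eq.
have -> : (fun s => \sum_(i < n) p i * x s 0 i) = \sum_(i < n) (fun s => p i * x s 0 i).
  by apply/funext => s; rewrite fct_sumE.
apply: is_derive_sum => i.
Qed.

Lemma L_const (R : realType) (n : nat) (E : seq (reaction n)) (k : 'I_(size E) -> R)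
  (x0 : 'rV[R]_n) (x : R -> 'rV[R]_n) (p : 'I_n -> R) :
  is_solution k x0 x -> (forall j, \sum_(i < n) stoich R E j i * p i = 0) ->
  forall t, 0 < t -> \sum_(i < n) p i * x t 0 i = \sum_(i < n) p i * x0 0 i.
Proof.
move=> [X0 Xpos Xcont Xder] Hp t t0.
set L := fun s => \sum_(i < n) p i * x s 0 i.
have dL : forall s : R, 0 < s -> is_derive s (1 : R) L 0.
  move=> s s0; have := deriv_L p (Xder s s0).
  by under eq_bigr do rewrite Hp mulr0; rewrite big1.
have eqs : \forall s \near 0^'+, L t = L s.
  near=> s.
  have s0 : 0 < s by near: s; exact: nbhs_right_gt.
  have st : s < t by near: s; exact: nbhs_right_lt.
  have [c _ ] := mvt_pos s0 st dL.
  by rewrite mul0r => /eqP; rewrite subr_eq0 => /eqP.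
have H1 : L @ 0^'+ --> \sum_(i < n) p i * x0 0 i.
  apply: sum_cvg => i; exact: cvgMr (Xcont i).
have H2 : L @ 0^'+ --> L t.
  apply: cvg_trans (near_eq_cvg eqs) (cvg_cst _).
exact: (cvg_unique (@Rhausdorff R) H2 H1).
Unshelve. all: by end_near.
Qed.

Lemma monom_gt0 (R : realType) (n : nat) (y : cplx n) (z : 'rV[R]_n) :
  positive_vec z -> 0 < monom y z.
Proof. by move=> Hz; apply: prodr_gt0 => i _; apply: exprn_gt0. Qed.

Lemma monom_ge (R : realType) (n : nat) (y : cplx n) (z : 'rV[R]_n) (cf : 'I_n -> R) :
  (forall i, 0 < cf i) -> (forall i, cf i <= z 0 i) ->
  \prod_(i < n) cf i ^+ y 0 i <= monom y z.
Proof.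
move=> c0 cz; apply: ler_prod => i _.
rewrite exprn_ge0 ?(ltW (c0 i)) //=.
by apply: lerXn2r; rewrite ?nnegrE ?(ltW (c0 i)) ?(le_trans (ltW (c0 i)) (cz i)).
Qed.

Unset Implicit Arguments.
Theorem theorem1p2 (R : realType) (n : nat) (E : seq (reaction n)) :
  is_network E ->
  deficiency R E = 0 ->
  ~ weakly_reversible E ->
  forall (k : 'I_(size E) -> R), (forall j, 0 < k j) ->
  forall (x0 : 'rV[R]_n), positive_vec x0 ->
  bounded_class (compat_class E x0) ->
  forall x : R -> 'rV[R]_n, is_solution k x0 x ->
  exists i : 'I_n, liminf_zero (fun t => x t 0 i).
Proof.
move=> _ Hdef NWR k kpos x0 x0pos [M HM] x Hsol.
have Hsol' := Hsol; case: Hsol' => X0 Xpos Xcont Xder.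
have [e [He Hne]] : exists e, e \in E /\ ~ reaches E e.2 e.1.
  apply: contrapT => H; apply: NWR => e0 He0; apply: contrapT => Hn; apply: H.
  by exists e0.
pose A := fun z : cplx n => `[< reaches E e.2 z >].
have [w Hw] := @defzero_w R n E A Hdef.
set S := stoich R E.
pose c := fun j : 'I_(size E) => \sum_(i < n) S j i * w i 0.
have cE : forall j, c j = (A (nth (reaction0 n) E j).2)%:R - (A (nth (reaction0 n) E j).1)%:R.
  by move=> j; rewrite -Hw mxE.
have c_ge0 : forall j, 0 <= c j.
  move=> j; rewrite cE.
  case HA1: (A (nth (reaction0 n) E j).1); last by rewrite subr0.
  have -> : A (nth (reaction0 n) E j).2 = true.
    apply/asboolP; move/asboolP: HA1 => [p [Hp Hl]].
    exists (rcons p (nth (reaction0 n) E j).2); split; last by rewrite last_rcons.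
    by rewrite rcons_path Hp Hl /= -surjective_pairing mem_nth.
  by rewrite subrr.
have j0lt : (index e E < size E)%N by rewrite index_mem.
pose j0 : 'I_(size E) := Ordinal j0lt.
have Hj0 : nth (reaction0 n) E j0 = e by rewrite /= nth_index.
have c_j0 : c j0 = 1.
  rewrite cE Hj0.
  have -> : A e.2 = true by apply/asboolP; exists [::].
  have -> : A e.1 = false by apply/asboolP.
  by rewrite subr0.
have inv : forall t, 0 < t -> (x t - x0 <= S)%MS.
  move=> t t0; rewrite submxE.
  have HC := mulmx_coker S.
  move: (cokermx S) HC => C HC.
  apply/eqP/matrixP => z i; rewrite !mxE.
  have Hc := L_const (p := fun l => C l i) Hsol.
  rewrite (ord1 z).
  under eq_bigr do rewrite !mxE mulrBl.
  rewrite sumrB.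
  rewrite [X in X - _](eq_bigr (fun l => C l i * x t 0 l)); last by move=> l _; rewrite mulrC.
  rewrite [X in _ - X](eq_bigr (fun l => C l i * x0 0 l)); last by move=> l _; rewrite mulrC.
  rewrite Hc ?subrr // => j.
  have := congr1 (fun N : 'M[R]_(size E, n) => N j i) HC.
  by rewrite !mxE.
pose g := fun s => \sum_(i < n) w i 0 * x s 0 i.
pose Bd := \sum_(i < n) `|w i 0| * M.
have gB : forall t, 0 < t -> g t <= Bd.
  move=> t t0; apply: ler_sum => i _.
  have Hx := HM (x t) (conj (Xpos t (ltW t0)) (inv t t0)) i.
  apply: le_trans (ler_norm _) _; rewrite normrM.
  by apply: ler_wpM2l.
have dg : forall t : R, 0 < t -> is_derive t (1 : R) g
   (\sum_(j < size E) (k j * monom (nth (reaction0 n) E j).1 (x t)) * c j).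
  by move=> t t0; apply: deriv_L; apply: Xder.
apply: contrapT => Hall.
have Hall' : forall i, ~ liminf_zero (fun t => x t 0 i).
  by move=> i Hi; apply: Hall; exists i.
have Hc : forall i, exists cc : R, 0 < cc /\ \forall t \near +oo, cc <= x t 0 i.
  move=> i; have [cc cc0 Hcc] := liminf_pos (fun t t0 => Xpos t t0 i) (Hall' i).
  by exists cc.
have [cf Hcf] := choice Hc.
have Hnear : \forall t \near +oo, forall i, cf i <= x t 0 i.
  by apply: filter_forall => i; exact: (Hcf i).2.
case: Hnear => T0 [_ HT0].
pose mu := \prod_(i < n) cf i ^+ (e.1 0 i).
have mu0 : 0 < mu by apply: prodr_gt0 => i _; apply: exprn_gt0; exact: (Hcf i).1.
pose delta := k j0 * mu.
have delta0 : 0 < delta by apply: mulr_gt0.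
pose T1 := `|T0| + 1.
have T10 : 0 < T1 by rewrite /T1; apply: ltr_pwDr.
have T01 : T0 < T1 by rewrite /T1; apply: (le_lt_trans (ler_norm T0)); rewrite ltrDl.
have dg_ge : forall s, T1 < s ->
   delta <= \sum_(j < size E) (k j * monom (nth (reaction0 n) E j).1 (x s)) * c j.
  move=> s s1.
  have s0 : 0 < s by exact: lt_trans T10 s1.
  rewrite (bigD1 j0) //= c_j0 mulr1.
  rewrite -[delta]addr0; apply: lerD; last first.
    apply: sumr_ge0 => j _; apply: mulr_ge0 => //; apply: mulr_ge0.
      exact: ltW.
    exact/ltW/monom_gt0/Xpos/ltW.
  rewrite /delta nth_index //; apply: ler_wpM2l; first exact: ltW.
  apply: monom_ge => i; first exact: (Hcf i).1.
  by apply: HT0; exact: lt_trans T01 s1.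
pose t := T1 + (`|Bd - g T1| + 1) / delta.
have T1t : T1 < t.
  by rewrite /t ltrDl; apply: divr_gt0 => //; apply: ltr_pwDr.
have [xi xi1 Hxi] := mvt_pos T10 T1t dg.
have := gB t (lt_trans T10 T1t).
have := dg_ge xi xi1.
have : t - T1 = (`|Bd - g T1| + 1) / delta by rewrite /t addrC addKr.
move=> Ht Hdl HgB.
have : delta * (t - T1) <= g t - g T1.
  rewrite Hxi; apply: ler_wpM2r => //; rewrite subr_ge0; exact: ltW.
rewrite Ht mulrC divfK ?gt_eqF //.
have := ler_norm (Bd - g T1).
lra.
Qed.
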